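(* Let $m,n$ be positive even integers, and let $P,Q\in\mathbb{C}[z_1,\dots,z_d]$ be nonzero polynomials of the form \[ P(z)=\sum_{\alpha\in(2\mathbb{N})^d,\ |\alpha|\le m}c_\alpha z^\alpha,\qquad Q(z)=\sum_{\alpha\in(2\mathbb{N})^d,\ |\alpha|\le n}d_\alpha z^\alpha, \] where $2\mathbb{N}=\{0,2,4,\dots\}$ (so every variable appears only to even powers). Then \[ \Bigl(\tfrac{m+n}{2}\Bigr)!\;\|P\,Q\|_a\ge\|P\|_a\,\|Q\|_a . \]
   Context: For multi-indices $\alpha\in\mathbb{N}^d$ write $z^\alpha=z_1^{\alpha_1}\cdots z_d^{\alpha_d}$, $\alpha!=\alpha_1!\cdots\alpha_d!$, $|\alpha|=\sum\alpha_i$. The apolar inner product on $\mathbb{C}[z_1,\dots,z_d]$ is $\langle \sum c_\alpha z^\alpha,\sum d_\alpha z^\alpha\rangle_a=\sum_\alpha\alpha!\,c_\alpha\overline{d_\alpha}$, with norm $\|P\|_a=\sqrt{\langle P,P\rangle_a}$. *)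

(* Defs.v *)
From HB Require Import structures.
From mathcomp Require Import all_boot all_order all_algebra.
From mathcomp Require Import mpoly.
From mathcomp.real_closed Require Import complex.
Set Implicit Arguments. Unset Strict Implicit. Unset Printing Implicit Defensive.
Import Order.TTheory GRing.Theory Num.Theory.
Local Open Scope ring_scope.

Definition mfact (d : nat) (a : 'X_{1..d}) : nat := (\prod_(i < d) (a i)`!)%N.

Definition apolar_sqnorm (C : numClosedFieldType) (d : nat) (P : {mpoly C[d]}) : C :=
  \sum_(a <- msupp P) (mfact a)%:R * `|P@_a| ^+ 2.

Definition apolar_norm (C : numClosedFieldType) (d : nat) (P : {mpoly C[d]}) : C :=
  sqrtC (apolar_sqnorm P).

Definition even_poly_deg_le (C : numClosedFieldType) (d : nat) (k : nat)
  (P : {mpoly C[d]}) : Prop :=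
  forall a : 'X_{1..d}, a \in msupp P -> (forall i : 'I_d, ~~ odd (a i)) /\ (mdeg a <= k)%N.

(* Main.v *)
Require Import Defs.
From HB Require Import structures.
From mathcomp Require Import all_boot all_order all_algebra.
From mathcomp Require Import mpoly.
From mathcomp.real_closed Require Import complex.
From mathcomp Require Import zify ring.
Set Implicit Arguments. Unset Strict Implicit. Unset Printing Implicit Defensive.
Import Order.TTheory GRing.Theory Num.Theory.
Local Open Scope ring_scope.

(* Proof strategy: homogenize P and Q with two extra variables s,u (weight (su)^j),
   then apply Fischer's inequality ||FG||^2 >= ||F||^2 ||G||^2 for homogeneous F,
   proved via an explicit sum-of-squares identity (Wick/Reznick formula). *)

Section Box.
Variables N B : nat.
Local Notation Phi := {ffun 'I_N -> 'I_B.+1}.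

Definition mon (p : Phi) : 'X_{1..N} := [multinom (p i : nat) | i < N].
Lemma monE p i : mon p i = p i. Proof. exact: mnmE. Qed.
Definition inbox (x : 'X_{1..N}) := [forall i, (x i <= B)%N].
Definition tobox (x : 'X_{1..N}) : Phi := [ffun i => inord (x i)].

Lemma inbox_mon p : inbox (mon p).
Proof. by apply/forallP=> i; rewrite monE -ltnS. Qed.

Lemma tobox_mon p : tobox (mon p) = p.
Proof. by apply/ffunP=> i; rewrite ffunE monE inord_val. Qed.

Lemma mon_tobox x : inbox x -> mon (tobox x) = x.
Proof.
by move=> /forallP h; apply/mnmP=> i; rewrite monE ffunE inordK // ltnS h.
Qed.

Lemma mon_inj : injective mon.
Proof. by move=> p q e; rewrite -(tobox_mon p) e tobox_mon. Qed.

Lemma inbox_le x y : (x <= y)%MM -> inbox y -> inbox x.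
Proof.
move=> /mnm_lepP h /forallP h2; apply/forallP=> i.
exact: leq_trans (h i) (h2 i).
Qed.

Variable C : numClosedFieldType.

Lemma sum_shift (c : 'X_{1..N}) (H : 'X_{1..N} -> C) :
  (forall v : Phi, ~~ inbox (c + mon v)%MM -> H (c + mon v)%MM = 0) ->
  \sum_(v : Phi) H (c + mon v)%MM = \sum_(g : Phi | (c <= mon g)%MM) H (mon g).
Proof.
move=> hv.
rewrite [RHS](reindex_onto (fun v => tobox (c + mon v)%MM) (fun g => tobox (mon g - c)%MM)); last first.
  move=> g hg; have hi : inbox (mon g - c)%MM.
    exact: inbox_le (lem_subr _ _) (inbox_mon g).
  by rewrite mon_tobox // addmC submK // tobox_mon.
rewrite (bigID (fun v : Phi => inbox (c + mon v)%MM)) /= [X in _ + X]big1; last first.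
  by move=> v /hv.
rewrite addr0; apply: eq_big => v.
  case hb: (inbox _).
    by rewrite mon_tobox // lem_addr /= addmC addmK tobox_mon eqxx.
  apply/esym/negbTE/negP=> /andP [h1 /eqP h2].
  move: hb; rewrite -h2 mon_tobox; last first.
    exact: inbox_le (lem_subr _ _) (inbox_mon _).
  by rewrite addmC submK // inbox_mon.
by move=> hb; rewrite mon_tobox.
Qed.

Lemma box_prod (c : 'X_{1..N}) (h : 'I_N -> nat -> C) :
  \sum_(u : Phi | (mon u <= c)%MM) \prod_i h i (u i)
  = \prod_i \sum_(t : 'I_B.+1 | (t <= c i)%N) h i t.
Proof.
rewrite (eq_bigr (fun i => \sum_(t : 'I_B.+1) (if (t <= c i)%N then h i t else 0)));
  last by move=> i _; rewrite big_mkcond.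
rewrite bigA_distr_bigA /= big_mkcond; apply: eq_bigr => u _.
case: (boolP (mon u <= c)%MM) => [/mnm_lepP hu | hu].
  by apply: eq_bigr => i _; rewrite -monE hu.
have [i hi] : exists i, ~~ (u i <= c i)%N.
  apply/existsP; apply: contraR hu => /existsPn hn.
  by apply/mnm_lepP=> i; rewrite monE; move: (hn i); rewrite negbK.
by rewrite (bigD1 i) //= (negbTE hi) mul0r.
Qed.

End Box.
Lemma coord_id (a a' g t : nat) : (t <= a)%N -> (t <= a')%N -> (a + a' - t <= g)%N ->
 (a ^_ t * a' ^_ t * ((g - a')`! * (g - a)`!) = t`! * (g - (a + a' - t))`! * ('C(a,t) * 'C(g - a, a' - t) * (a'`! * (g - a')`!)))%N.
Proof.
move=> ta ta' hg.
rewrite -(bin_ffact a t).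
have e1 : (g - (a + a' - t) = (g - a) - (a' - t))%N by lia.
have e2 : (a' - t <= g - a)%N by lia.
rewrite e1 -(ffact_fact ta').
rewrite -(bin_fact e2).
rewrite -(bin_ffact a' t).
ring.
Qed.
Lemma coord_zero (a a' g t : nat) : (a <= g)%N -> (t <= a')%N -> ~~ ((t <= a) && (a + a' - t <= g))%N -> ('C(a,t) * 'C(g - a, a' - t) = 0)%N.
Proof.
move=> ag ta' /nandP [h|h].
  by rewrite bin_small ?mul0n // ltnNge.
by rewrite (@bin_small (g - a)) ?muln0 //; lia.
Qed.
Lemma vdm (a a' g : nat) : (a <= g)%N -> (a' <= g)%N ->
  (\sum_(t < a'.+1) 'C(a,t) * 'C(g - a, a' - t) * (a'`! * (g - a')`!) = g`!)%N.
Proof.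
move=> ag a'g; rewrite -big_distrl /= binomial.Vandermonde subnKC //.
by rewrite bin_fact.
Qed.
Definition ff (d : nat) (a u : 'X_{1..d}) : nat := (\prod_(i < d) (a i) ^_ (u i))%N.

Lemma sqr_sum (C : numClosedFieldType) (I : finType) (P : pred I) (F : I -> C) :
  `|\sum_(i | P i) F i| ^+ 2 = \sum_(i | P i) \sum_(j | P j) F i * (F j)^*.
Proof.
rewrite normCK rmorph_sum big_distrl /=; apply: eq_bigr => i _.
by rewrite big_distrr.
Qed.

Lemma mfact_gt0 d (a : 'X_{1..d}) : (0 < mfact a)%N.
Proof. by rewrite /mfact prodn_gt0 // => i; rewrite fact_gt0. Qed.

Lemma addKm' n (c x : 'X_{1..n}) : (c + x - c = x)%MM.
Proof. by rewrite addmC addmK. Qed.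

Lemma lem_exists n (x y : 'X_{1..n}) : ~~ (x <= y)%MM -> exists i, ~~ (x i <= y i)%N.
Proof.
move=> h; apply/existsP; apply: contraR h => /existsPn hn.
by apply/mnm_lepP=> i; move: (hn i); rewrite negbK.
Qed.

Section Fischer.
Variable C : numClosedFieldType.
Variables N B : nat.
Local Notation Phi := {ffun 'I_N -> 'I_B.+1}.
Local Notation mon := (@mon N B).
Variables f g : 'X_{1..N} -> C.
Hypothesis hf : forall x i, f x != 0 -> (2 * x i <= B)%N.
Hypothesis hg : forall x i, g x != 0 -> (2 * x i <= B)%N.

Definition XX (u v a : 'X_{1..N}) : C :=
  f a * (g (v + a - u)%MM)^* * (ff a u * mfact (v + a - u)%MM)%:R.
Definition SS (u v : 'X_{1..N}) : C := \sum_(a : Phi | (u <= mon a)%MM) XX u v (mon a).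
Definition kk (u v : 'X_{1..N}) : C := ((mfact u * mfact v)%:R)^-1.
Definition cc (u a a' : 'X_{1..N}) := (a + a' - u)%MM.
Definition Wt (u gm a a' : 'X_{1..N}) : C :=
  kk u (gm - cc u a a')%MM * (ff a u * mfact (gm - a')%MM)%:R * (ff a' u * mfact (gm - a)%MM)%:R.
Definition hh (gm a a' : 'X_{1..N}) : C :=
  f a * g (gm - a)%MM * (f a' * g (gm - a')%MM)^*.

Lemma step_shift (u a a' : Phi) : (mon u <= mon a)%MM -> (mon u <= mon a')%MM ->
  \sum_(v : Phi) kk (mon u) (mon v) * (XX (mon u) (mon v) (mon a) * (XX (mon u) (mon v) (mon a'))^*)
  = \sum_(gm : Phi | (cc (mon u) (mon a) (mon a') <= mon gm)%MM)
       Wt (mon u) (mon gm) (mon a) (mon a') * hh (mon gm) (mon a) (mon a').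
Proof.
move=> ua ua'.
set c := cc (mon u) (mon a) (mon a').
set T := fun v => kk (mon u) v * (XX (mon u) v (mon a) * (XX (mon u) v (mon a'))^*).
rewrite (eq_bigr (fun v : Phi => T ((c + mon v) - c)%MM)); last first.
  by move=> v _; rewrite addKm'.
rewrite (@sum_shift N B C c (fun y => T (y - c)%MM)); last first.
  move=> v hv; rewrite addKm' /T /XX.
  case: (eqVneq (f (mon a)) 0) => [->|fa]; first by rewrite !mul0r mulr0.
  case: (eqVneq (g (mon v + mon a' - mon u)%MM) 0) => [->|ga].
    by rewrite !rmorphM /= conjCK mulr0 !mul0r !mulr0.
  move: hv; apply: contraNeq => _; apply/forallP => i.
  move/mnm_lepP: (ua') => /(_ i) ua'i; move: (@hf _ i fa) (@hg _ i ga) ua'i; rewrite /c /cc.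
  rewrite !mnmDE !mnmBE !mnmDE. lia.
apply: eq_bigr => gm hc.
move/mnm_lepP: (ua) => ua_i; move/mnm_lepP: (ua') => ua'_i; move/mnm_lepP: (hc) => hc_i.
have e1 : (mon gm - c + mon a - mon u = mon gm - mon a')%MM.
  apply/mnmP=> i; move: (ua_i i) (ua'_i i) (hc_i i); rewrite /c /cc !(mnmBE, mnmDE). lia.
have e2 : (mon gm - c + mon a' - mon u = mon gm - mon a)%MM.
  apply/mnmP=> i; move: (ua_i i) (ua'_i i) (hc_i i); rewrite /c /cc !(mnmBE, mnmDE). lia.
rewrite /T /XX e1 e2 /Wt /hh -/c !rmorphM /= conjCK !conjC_nat.
ring.
Qed.

Lemma Wt_prod (u gm a a' : 'X_{1..N}) : (u <= a)%MM -> (u <= a')%MM -> (cc u a a' <= gm)%MM ->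
  Wt u gm a a' = (\prod_i ('C(a i, u i) * 'C(gm i - a i, a' i - u i) * ((a' i)`! * (gm i - a' i)`!))%N)%:R.
Proof.
move=> /mnm_lepP h1 /mnm_lepP h2 /mnm_lepP h3.
rewrite /Wt /kk -mulrA -natrM.
set P := (\prod_i _)%N.
have -> : (ff a u * mfact (gm - a') * (ff a' u * mfact (gm - a)) =
           mfact u * mfact (gm - cc u a a') * P)%N.
  rewrite /ff /mfact /P -!big_split /=; apply: eq_bigr => i _.
  move: (h1 i) (h2 i) (h3 i); rewrite /cc !(mnmBE, mnmDE) => x1 x2 x3.
  rewrite -(coord_id x1 x2 x3). ring.
rewrite [X in _ * X]natrM mulKf // pnatr_eq0 -lt0n muln_gt0 !mfact_gt0 //.
Qed.

Lemma sum_Wt (gm a a' : Phi) :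
  \sum_(u : Phi) (if [&& (mon u <= mon a)%MM, (mon u <= mon a')%MM & (cc (mon u) (mon a) (mon a') <= mon gm)%MM]
                  then Wt (mon u) (mon gm) (mon a) (mon a') else 0)
  = if (mon a <= mon gm)%MM && (mon a' <= mon gm)%MM then (mfact (mon gm))%:R else 0.
Proof.
case: ifP => hag; last first.
  apply: big1 => u _; case: ifP => // /and3P [ua ua' hc].
  move: hag; rewrite -[RHS]/false => /negbT /negP; case.
  move/mnm_lepP: ua => ua; move/mnm_lepP: ua' => ua'; move/mnm_lepP: hc => hc.
  apply/andP; split; apply/mnm_lepP => i; move: (ua i) (ua' i) (hc i); rewrite /cc !(mnmBE, mnmDE); lia.
move/andP: hag => [ag a'g].
set v := fun (i : 'I_N) (t : nat) => ('C(mon a i, t) * 'C(mon gm i - mon a i, mon a' i - t) * ((mon a' i)`! * (mon gm i - mon a' i)`!))%N.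
transitivity (\sum_(u : Phi | (mon u <= mon a')%MM) \prod_i ((v i (u i))%:R : C)).
  rewrite [RHS]big_mkcond; apply: eq_bigr => u _.
  case: (boolP (mon u <= mon a')%MM) => ua'; last by rewrite andbF.
  rewrite /=.
  case: (boolP ((mon u <= mon a)%MM && (cc (mon u) (mon a) (mon a') <= mon gm)%MM)) => hc.
    move/andP: hc => [ua hc]; rewrite Wt_prod // natr_prod; apply: eq_bigr => i _.
    by rewrite /v -monE.
  move/mnm_lepP: ag => ag; move/mnm_lepP: ua' => ua'.
  have [i hi] : exists i, ~~ ((mon u i <= mon a i) && (mon a i + mon a' i - mon u i <= mon gm i))%N.
    move: hc; case/nandP => /lem_exists [i hi]; exists i.
      by rewrite (negbTE hi).
    by move: hi; rewrite /cc !(mnmBE, mnmDE) => /negbTE ->; rewrite andbF.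
  rewrite (bigD1 i) //= /v -monE coord_zero //.
  by rewrite mul0n mul0r.
rewrite (@box_prod N B C (mon a') (fun i t => ((v i t)%:R : C))) /mfact natr_prod; apply: eq_bigr => i _.
move/mnm_lepP: ag => /(_ i) ag; move/mnm_lepP: a'g => /(_ i) a'g.
have hb : (mon a' i < B.+1)%N by rewrite monE.
rewrite (eq_bigl (fun t : 'I_B.+1 => (t < (mon a' i).+1)%N)); last by move=> t; rewrite ltnS.
rewrite -(big_ord_widen (B.+1) (fun t => ((v i t)%:R : C)) hb) -natr_sum /v.
by rewrite vdm.
Qed.


Lemma main_id :
  \sum_(gm : Phi) (mfact (mon gm))%:R *
     `|\sum_(a : Phi | (mon a <= mon gm)%MM) f (mon a) * g (mon gm - mon a)%MM| ^+ 2
  = \sum_(u : Phi) \sum_(v : Phi) kk (mon u) (mon v) * `|SS (mon u) (mon v)| ^+ 2.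
Proof.
pose Z (u a a' gm : Phi) := if [&& (mon u <= mon a)%MM, (mon u <= mon a')%MM
      & (cc (mon u) (mon a) (mon a') <= mon gm)%MM]
   then Wt (mon u) (mon gm) (mon a) (mon a') * hh (mon gm) (mon a) (mon a') else 0.
transitivity (\sum_(gm : Phi) \sum_(a : Phi) \sum_(a' : Phi) \sum_(u : Phi) Z u a a' gm).
  apply: eq_bigr => gm _.
  rewrite sqr_sum big_distrr /= [LHS]big_mkcond; apply: eq_bigr => a _.
  have -> : \sum_(a' : Phi) \sum_(u : Phi) Z u a a' gm =
     \sum_(a' : Phi) hh (mon gm) (mon a) (mon a') *
        (if (mon a <= mon gm)%MM && (mon a' <= mon gm)%MM then (mfact (mon gm))%:R else 0).
    apply: eq_bigr => a' _; rewrite -sum_Wt big_distrr /=; apply: eq_bigr => u _.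
    by rewrite /Z; case: ifP => _; rewrite ?mulr0 // mulrC.
  case: ifP => ag /=; last by rewrite big1 // => a' _; rewrite mulr0.
  rewrite big_distrr /= [LHS]big_mkcond; apply: eq_bigr => a' _.
  by case: ifP => _; rewrite ?mulr0 // mulrC /hh.
under eq_bigr => gm _ do under eq_bigr => a _ do rewrite exchange_big.
under eq_bigr => gm _ do rewrite exchange_big.
rewrite exchange_big.
under eq_bigr => u _ do rewrite exchange_big.
under eq_bigr => u _ do under eq_bigr => a _ do rewrite exchange_big.
apply: eq_bigr => u _ /=.
transitivity (\sum_(a : Phi | (mon u <= mon a)%MM) \sum_(a' : Phi | (mon u <= mon a')%MM)
   \sum_(v : Phi) kk (mon u) (mon v) * (XX (mon u) (mon v) (mon a) * (XX (mon u) (mon v) (mon a'))^*)); last first.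
  symmetry; transitivity (\sum_(v : Phi) \sum_(a : Phi | (mon u <= mon a)%MM) \sum_(a' : Phi | (mon u <= mon a')%MM)
     kk (mon u) (mon v) * (XX (mon u) (mon v) (mon a) * (XX (mon u) (mon v) (mon a'))^*)).
    apply: eq_bigr => v _; rewrite /SS sqr_sum big_distrr; apply: eq_bigr => a _.
    by rewrite big_distrr.
  by rewrite exchange_big; apply: eq_bigr => a _; rewrite exchange_big.
rewrite [RHS]big_mkcond; apply: eq_bigr => a _.
case: ifP => ua; last first.
  by apply: big1 => a' _; apply: big1 => gm _; rewrite /Z ua.
rewrite [RHS]big_mkcond; apply: eq_bigr => a' _.
case: ifP => ua'; last first.
  by apply: big1 => gm _; rewrite /Z ua ua' andbF.
rewrite step_shift // [RHS]big_mkcond; apply: eq_bigr => gm _.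
by rewrite /Z ua ua'.
Qed.
End Fischer.

Lemma lem_mdeg_eq n (x y : 'X_{1..n}) : (x <= y)%MM -> mdeg x = mdeg y -> x = y.
Proof.
move=> le e; have := mdegD (y - x) x; rewrite submK // -e.
move/eqP; rewrite -{1}(add0n (mdeg x)) eqn_add2r eq_sym mdeg_eq0 => /eqP h.
by rewrite -(submK le) h add0m.
Qed.

Lemma ff_diag n (x : 'X_{1..n}) : ff x x = mfact x.
Proof. by rewrite /ff /mfact; apply: eq_bigr => i _; rewrite ffactnn. Qed.

Lemma kk_ge0 (C : numClosedFieldType) n (x y : 'X_{1..n}) : 0 <= (kk C x y).
Proof. by rewrite /kk invr_ge0 ler0n. Qed.

Section Top.
Variable C : numClosedFieldType.
Variables N B : nat.
Local Notation Phi := {ffun 'I_N -> 'I_B.+1}.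
Local Notation mon := (@mon N B).
Variables f g : 'X_{1..N} -> C.
Variable m : nat.
Hypothesis hdeg : forall x, f x != 0 -> mdeg x = m.

Lemma SS_top (u v : Phi) : f (mon u) != 0 ->
  SS B f g (mon u) (mon v) = f (mon u) * (g (mon v))^* * (mfact (mon u) * mfact (mon v))%:R.
Proof.
move=> fu; rewrite /SS (bigD1 u) ?lepm_refl //= big1 ?addr0; last first.
  move=> a /andP [ua au]; rewrite /XX.
  case: (eqVneq (f (mon a)) 0) => [->|fa]; first by rewrite !mul0r.
  have e := lem_mdeg_eq ua (etrans (hdeg fu) (esym (hdeg fa))).
  by move: au; rewrite (mon_inj e) eqxx.
by rewrite /XX addmK ff_diag.
Qed.

Lemma top_bound :
  (\sum_(u : Phi) (mfact (mon u))%:R * `|f (mon u)| ^+ 2) *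
  (\sum_(v : Phi) (mfact (mon v))%:R * `|g (mon v)| ^+ 2)
  <= \sum_(u : Phi) \sum_(v : Phi) kk C (mon u) (mon v) * `|SS B f g (mon u) (mon v)| ^+ 2.
Proof.
rewrite big_distrl /=; apply: ler_sum => u _.
rewrite big_distrr /=; apply: ler_sum => v _.
case: (eqVneq (f (mon u)) 0) => [->|fu].
  by rewrite normr0 expr0n /= mulr0 mul0r mulr_ge0 ?kk_ge0 // exprn_ge0.
rewrite SS_top // /kk !normrM norm_conjC normr_nat !exprMn.
have h1 : ((mfact (mon u))%:R : C) != 0 by rewrite pnatr_eq0 -lt0n mfact_gt0.
have h2 : ((mfact (mon v))%:R : C) != 0 by rewrite pnatr_eq0 -lt0n mfact_gt0.
rewrite natrM le_eqVlt; apply/orP; left; apply/eqP; field.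
by rewrite h1 h2.
Qed.

End Top.

Section Conv.
Variable C : numClosedFieldType.
Variables N B : nat.
Local Notation Phi := {ffun 'I_N -> 'I_B.+1}.
Local Notation mon := (@mon N B).
Local Notation inbox := (@inbox N B).
Local Notation tobox := (@tobox N B).

Lemma seq_box (s : seq 'X_{1..N}) (H : 'X_{1..N} -> C) :
  uniq s -> (forall x, x \in s -> inbox x) -> (forall x, x \notin s -> H x = 0) ->
  \sum_(x <- s) H x = \sum_(p : Phi) H (mon p).
Proof.
move=> us sb hz.
rewrite (eq_big_seq (fun x => H (mon (tobox x)))); last first.
  by move=> x xs; rewrite mon_tobox // sb.
rewrite -(big_map tobox xpredT (fun p => H (mon p))) big_uniq /=; last first.
  rewrite map_inj_in_uniq // => x y xs ys e.
  by rewrite -(mon_tobox (sb _ xs)) e mon_tobox // sb.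
rewrite [RHS](bigID (fun p => p \in map tobox s)) /= [X in _ = _ + X]big1 ?addr0 //.
move=> p hp; apply: hz; apply: contra hp => hs.
by apply/mapP; exists (mon p) => //; rewrite tobox_mon.
Qed.

Lemma sqnorm_box (F : {mpoly C[N]}) : (forall x, x \in msupp F -> inbox x) ->
  apolar_sqnorm F = \sum_(p : Phi) (mfact (mon p))%:R * `|F@_(mon p)| ^+ 2.
Proof.
move=> hb; rewrite /apolar_sqnorm (seq_box (H := fun x => (mfact x)%:R * `|F@_x| ^+ 2)) //.
by move=> x /memN_msupp_eq0 ->; rewrite normr0 expr0n mulr0.
Qed.

Lemma coefM_box (F G : {mpoly C[N]}) (x : 'X_{1..N}) :
  (forall y, y \in msupp F -> inbox y) -> (forall y, y \in msupp G -> inbox y) -> inbox x ->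
  (F * G)@_x = \sum_(a : Phi | (mon a <= x)%MM) F@_(mon a) * G@_(x - mon a)%MM.
Proof.
move=> hF hG hx.
rewrite mpolyME raddf_sum /= big_allpairs.
rewrite (seq_box (H := fun a => \sum_(b <- msupp G) ((F@_a * G@_b) *: 'X_[(a + b)%MM])@_x)) //; last first.
  by move=> y /memN_msupp_eq0 hy; apply: big1 => b _; rewrite hy mul0r scale0r mcoeff0.
rewrite [RHS]big_mkcond; apply: eq_bigr => a _.
rewrite (seq_box (H := fun b => ((F@_(mon a) * G@_b) *: 'X_[(mon a + b)%MM])@_x)) //; last first.
  by move=> y /memN_msupp_eq0 hy; rewrite hy mulr0 scale0r mcoeff0.
case: ifP => ax.
  have hi : inbox (x - mon a)%MM by exact: inbox_le (lem_subr _ _) hx.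
  rewrite (bigD1 (tobox (x - mon a)%MM)) //= big1 ?addr0.
    by rewrite mcoeffZ mcoeffX mon_tobox // addmC submK // eqxx mulr1.
  move=> b hb; rewrite mcoeffZ mcoeffX; case: eqP; rewrite ?mulr0 // => e.
  move: hb; rewrite -e addKm' tobox_mon eqxx //.
apply: big1 => b _; rewrite mcoeffZ mcoeffX; case: eqP; rewrite ?mulr0 // => e.
by move: ax; rewrite -e lem_addr.
Qed.

End Conv.

Lemma mnm_le_mdeg n (x : 'X_{1..n}) i : (x i <= mdeg x)%N.
Proof. by rewrite mdegE (bigD1 i) //= leq_addr. Qed.

Lemma fischer_mpoly (C : numClosedFieldType) N (F G : {mpoly C[N]}) m :
  (forall x, x \in msupp F -> mdeg x = m) ->
  apolar_sqnorm F * apolar_sqnorm G <= apolar_sqnorm (F * G).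
Proof.
move=> hdeg.
set B := (2 * (msize F + msize G).+1)%N.
have hF : forall x i, F@_x != 0 -> (2 * x i <= B)%N.
  move=> x i; rewrite -mcoeff_msupp => /msize_mdeg_lt h.
  have := mnm_le_mdeg x i; rewrite /B; lia.
have hG : forall x i, G@_x != 0 -> (2 * x i <= B)%N.
  move=> x i; rewrite -mcoeff_msupp => /msize_mdeg_lt h.
  have := mnm_le_mdeg x i; rewrite /B; lia.
have bF : forall x, x \in msupp F -> @inbox N B x.
  move=> x; rewrite mcoeff_msupp => h; apply/forallP=> i; have := hF x i h; lia.
have bG : forall x, x \in msupp G -> @inbox N B x.
  move=> x; rewrite mcoeff_msupp => h; apply/forallP=> i; have := hG x i h; lia.
have bFG : forall x, x \in msupp (F * G) -> @inbox N B x.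
  move=> x /msize_mdeg_lt h; apply/forallP=> i.
  have := mnm_le_mdeg x i; have := msizeM_le F G; rewrite /B; lia.
rewrite (sqnorm_box bF) (sqnorm_box bG) (sqnorm_box bFG).
under [X in _ <= X]eq_bigr => p _ do rewrite (coefM_box bF bG (inbox_mon p)).
rewrite (@main_id C N B (fun x => F@_x) (fun x => G@_x)) //.
apply: (@top_bound C N B (fun x => F@_x) (fun x => G@_x) m).
by move=> x; rewrite -mcoeff_msupp; apply: hdeg.
Qed.

Lemma fact_mono a b : (a <= b)%N -> (a`! <= b`!)%N.
Proof.
elim: b => [|b IH]; first by rewrite leqn0 => /eqP ->.
rewrite leq_eqVlt => /orP [/eqP -> //|]; rewrite ltnS => /IH h.
by rewrite factS (leq_trans h) // leq_pmull.
Qed.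

Lemma sqnorm_seq (C : numClosedFieldType) n (S : {mpoly C[n]}) (r : seq 'X_{1..n}) :
  uniq r -> {subset msupp S <= r} ->
  apolar_sqnorm S = \sum_(x <- r) (mfact x)%:R * `|S@_x| ^+ 2.
Proof.
move=> ur sub.
set B := (\max_(y <- r) mdeg y)%N.
have bx : forall x, x \in r -> @inbox n B x.
  move=> x xr; apply/forallP=> i; apply: leq_trans (mnm_le_mdeg x i) _.
  exact: (leq_bigmax_seq (F := mdeg)).
rewrite /apolar_sqnorm (seq_box (B := B) (H := fun x => (mfact x)%:R * `|S@_x| ^+ 2)) //; last 2 first.
- by move=> x /sub; apply: bx.
- by move=> x /memN_msupp_eq0 ->; rewrite normr0 expr0n mulr0.
rewrite (seq_box (B := B) (H := fun x => (mfact x)%:R * `|S@_x| ^+ 2)) //.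
move=> x xr; have : x \notin msupp S by apply: contra xr; apply: sub.
by move/memN_msupp_eq0 ->; rewrite normr0 expr0n mulr0.
Qed.

Lemma sqnorm_k (C : numClosedFieldType) n (S : {mpoly C[n]}) k : (msize S <= k)%N ->
  apolar_sqnorm S = \sum_(c : 'X_{1..n < k}) (mfact (val c))%:R * `|S@_(val c)| ^+ 2.
Proof.
move=> hk; rewrite (sqnorm_seq (r := [seq val c | c <- index_enum 'X_{1..n < k}])).
- by rewrite big_map.
- by rewrite map_inj_uniq ?index_enum_uniq //; apply: val_inj.
move=> x /msize_mdeg_lt h; apply/mapP.
have hx : (mdeg x < k)%N by apply: leq_trans h hk.
by exists (BMultinom hx) => //; rewrite mem_index_enum.
Qed.

Section Hom.
Variable C : numClosedFieldType.
Variable d : nat.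

Definition ext (K : nat) (a : 'X_{1..d}) : 'X_{1..d.+2} :=
  [multinom [tuple of ((K - mdeg a)./2)%N :: ((K - mdeg a)./2)%N :: multinom_val a]].

Lemma ext0 K a : ext K a ord0 = ((K - mdeg a)./2)%N.
Proof. by rewrite /ext /fun_of_multinom /= tnth0. Qed.
Lemma ext1 K a : ext K a (lift ord0 ord0) = ((K - mdeg a)./2)%N.
Proof. by rewrite /ext /fun_of_multinom /= tnthS tnth0. Qed.
Lemma extS K a i : ext K a (lift ord0 (lift ord0 i)) = a i.
Proof. by rewrite /ext /fun_of_multinom /= !tnthS. Qed.

Lemma mfact_ext K a : mfact (ext K a) = (((K - mdeg a)./2)`! * ((K - mdeg a)./2)`! * mfact a)%N.
Proof.
rewrite /mfact !big_ord_recl ext0 ext1 mulnA; congr (_ * _)%N.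
by apply: eq_bigr => i _; rewrite extS.
Qed.

Lemma mdeg_ext K a : mdeg (ext K a) = (((K - mdeg a)./2) + ((K - mdeg a)./2) + mdeg a)%N.
Proof.
rewrite [LHS]mdegE !big_ord_recl ext0 ext1 addnA mdegE; congr (_ + _)%N.
by apply: eq_bigr => i _; rewrite extS.
Qed.

Lemma ext_inj K : injective (ext K).
Proof. by move=> a b e; apply/mnmP=> i; rewrite -!(extS K) e. Qed.

Lemma ext_add K1 K2 a b : ~~ odd K1 -> ~~ odd K2 -> ~~ odd (mdeg a) -> ~~ odd (mdeg b) ->
  (mdeg a <= K1)%N -> (mdeg b <= K2)%N ->
  (ext K1 a + ext K2 b = ext (K1 + K2) (a + b))%MM.
Proof.
move=> o1 o2 oa ob la lb; apply/mnmP=> i; rewrite mnmDE.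
case: (unliftP ord0 i) => [j ->|->]; last by rewrite !ext0 mdegD; lia.
case: (unliftP ord0 j) => [k ->|->]; last by rewrite !ext1 mdegD; lia.
by rewrite !extS mnmDE.
Qed.

Definition homz (K k : nat) (R : {mpoly C[d]}) : {mpoly C[d.+2]} :=
  \sum_(c : 'X_{1..d < k}) R@_c *: 'X_[ext K c].

Lemma homz_coef K k R (c : 'X_{1..d < k}) : (homz K k R)@_(ext K c) = R@_c.
Proof.
rewrite /homz raddf_sum (bigD1 c) //= big1 ?addr0.
  by rewrite mcoeffZ mcoeffX eqxx mulr1.
move=> c' hc; rewrite mcoeffZ mcoeffX.
case: eqP => [/ext_inj e|]; last by rewrite mulr0.
by move: hc; rewrite (val_inj e) eqxx.
Qed.

Lemma homz_supp K k R x : x \in msupp (homz K k R) -> exists c : 'X_{1..d < k}, x = ext K c.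
Proof.
rewrite mcoeff_msupp => h.
case: (pickP (fun c : 'X_{1..d < k} => x == ext K (val c))) => [c /eqP e | hn]; first by exists c.
move: h; rewrite /homz raddf_sum big1 ?eqxx // => c _ /=; rewrite mcoeffZ mcoeffX.
case: eqP => [e|]; last by rewrite mulr0.
by move: (hn c); rewrite e eqxx.
Qed.

Lemma sqnorm_hom K k R :
  apolar_sqnorm (homz K k R) = \sum_(c : 'X_{1..d < k}) (mfact (ext K c))%:R * `|R@_c| ^+ 2.
Proof.
rewrite (sqnorm_seq (r := [seq ext K (val c) | c <- index_enum 'X_{1..d < k}])).
- by rewrite big_map; apply: eq_bigr => c _; rewrite homz_coef.
- rewrite map_inj_uniq ?index_enum_uniq // => a b /ext_inj; apply: val_inj.
move=> x /homz_supp [c ->]; apply/mapP; exists c => //; by rewrite mem_index_enum.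
Qed.

Lemma homzD K k R S : homz K k (R + S) = homz K k R + homz K k S.
Proof. by rewrite /homz -big_split /=; apply: eq_bigr => c _; rewrite mcoeffD scalerDl. Qed.
Lemma homzZ K k a R : homz K k (a *: R) = a *: homz K k R.
Proof. by rewrite /homz scaler_sumr; apply: eq_bigr => c _; rewrite mcoeffZ scalerA. Qed.
Lemma homz0 K k : homz K k 0 = 0.
Proof. by rewrite /homz big1 // => c _; rewrite mcoeff0 scale0r. Qed.
Lemma homz_sum K k (I : Type) (r : seq I) (F : I -> {mpoly C[d]}) :
  homz K k (\sum_(i <- r) F i) = \sum_(i <- r) homz K k (F i).
Proof.
elim: r => [|x r IH]; first by rewrite !big_nil homz0.
by rewrite !big_cons homzD IH.
Qed.
Lemma homzX K k (c : 'X_{1..d}) : (mdeg c < k)%N -> homz K k 'X_[c] = 'X_[ext K c].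
Proof.
move=> hc; rewrite /homz (bigD1 (BMultinom hc)) //= big1 ?addr0.
  by rewrite mcoeffX eqxx scale1r.
move=> c' hc'; rewrite mcoeffX; case: eqP; last by rewrite scale0r.
by move=> e; move: hc'; rewrite -val_eqE /= e eqxx.
Qed.

End Hom.

Lemma even_mdeg n (a : 'X_{1..n}) : (forall i, ~~ odd (a i)) -> ~~ odd (mdeg a).
Proof.
move=> h; rewrite mdegE; elim/big_ind: _ => //.
by move=> x y hx hy; rewrite oddD (negbTE hx) (negbTE hy).
Qed.

Lemma sqnorm_ge0 (C : numClosedFieldType) n (S : {mpoly C[n]}) : 0 <= apolar_sqnorm S.
Proof. by apply: sumr_ge0 => x _; rewrite mulr_ge0 ?ler0n ?exprn_ge0. Qed.

Lemma key (C : numClosedFieldType) d m n (P Q : {mpoly C[d]}) :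
  ~~ odd m -> ~~ odd n -> even_poly_deg_le m P -> even_poly_deg_le n Q ->
  apolar_sqnorm P * apolar_sqnorm Q <= ((((m + n)./2)`!)%:R) ^+ 2 * apolar_sqnorm (P * Q).
Proof.
move=> om on hP hQ.
set k := (msize P + msize Q).+1.
have kP : (msize P <= k)%N by rewrite /k; lia.
have kQ : (msize Q <= k)%N by rewrite /k; lia.
have kPQ : (msize (P * Q) <= k)%N by apply: msizeM_le.
set Fp := homz m k P; set Gq := homz n k Q.
have hdeg : forall x, x \in msupp Fp -> mdeg x = m.
  move=> x hx; have [c e] := homz_supp hx; move: hx; rewrite e mcoeff_msupp homz_coef -mcoeff_msupp.
  move=> /hP [he hd]; have := even_mdeg he; rewrite mdeg_ext; lia.
have FG : Fp * Gq = homz (m + n) k (P * Q).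
  rewrite (mpolywME kP kQ) homz_sum /Fp /Gq [X in X * _]/homz [X in _ * X]/homz big_distrl /=.
  under eq_bigr => a _ do rewrite big_distrr /=.
  rewrite pair_bigA /=; apply: eq_bigr => [[a b]] _ /=.
  rewrite -scalerAl -scalerAr scalerA -mpolyXD homzZ.
  case: (eqVneq P@_a 0) => [->|pa]; first by rewrite !mul0r !scale0r.
  case: (eqVneq Q@_b 0) => [->|qb]; first by rewrite !mulr0 !scale0r.
  have aP : val a \in msupp P by rewrite mcoeff_msupp.
  have bQ : val b \in msupp Q by rewrite mcoeff_msupp.
  have [ha hda] := hP _ aP; have [hb hdb] := hQ _ bQ.
  rewrite ext_add ?even_mdeg // homzX // mdegD.
  have h1 : (mdeg a < msize P)%N := msize_mdeg_lt aP.
  have h2 : (mdeg b < msize Q)%N := msize_mdeg_lt bQ.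
  move: h1 h2; rewrite /k => h1 h2; lia.
have n1 : forall K (S : {mpoly C[d]}), (msize S <= k)%N -> apolar_sqnorm S <= apolar_sqnorm (homz K k S).
  move=> K S hS; rewrite (sqnorm_k hS) sqnorm_hom; apply: ler_sum => c _.
  rewrite ler_wpM2r ?exprn_ge0 // ler_nat mfact_ext leq_pmull //.
  by rewrite muln_gt0 fact_gt0.
have n3 : apolar_sqnorm (Fp * Gq) <= ((((m + n)./2)`!)%:R) ^+ 2 * apolar_sqnorm (P * Q).
  rewrite FG sqnorm_hom (sqnorm_k kPQ) mulr_sumr; apply: ler_sum => c _.
  rewrite [X in _ <= X]mulrA -natrX -natrM; apply: ler_wpM2r; first by rewrite exprn_ge0.
  rewrite ler_nat mfact_ext.
  rewrite leq_mul2r; apply/orP; right; rewrite expnS expn1 leq_mul //; apply: fact_mono; lia.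
apply: le_trans n3; apply: le_trans (fischer_mpoly _ hdeg).
by rewrite ler_pM ?sqnorm_ge0 ?n1.
Qed.

Unset Implicit Arguments.
Local Open Scope complex_scope.

Theorem theorem4p2 (R : rcfType) (d m n : nat)
  (P Q : {mpoly R[i][d]})
  (hm : (0 < m)%N) (hme : ~~ odd m) (hn : (0 < n)%N) (hne : ~~ odd n)
  (hP0 : P != 0) (hQ0 : Q != 0)
  (hP : even_poly_deg_le m P) (hQ : even_poly_deg_le n Q) :
  apolar_norm P * apolar_norm Q <= ((m + n)./2)`!%:R * apolar_norm (P * Q).
Proof.
rewrite /apolar_norm -sqrtCM ?nnegrE ?sqnorm_ge0 //.
rewrite -[X in _ <= X * _](@sqrCK _ (((m + n)./2)`!)%:R) ?ler0n //.
rewrite -sqrtCM ?nnegrE ?exprn_ge0 ?ler0n ?sqnorm_ge0 //.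
rewrite ler_sqrtC ?nnegrE ?mulr_ge0 ?exprn_ge0 ?ler0n ?sqnorm_ge0 //.
exact: key.
Qed.
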